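(* Let $x_1,\dots,x_n \in \mathbb{R}^d$, $w \in \mathbb{R}^d$ and $c \in \mathbb{R}$. If $F(w) \geq c$, then $G(w) \geq \frac{1 - \exp(-nc)}{n}$. If additionally $c \leq 1/n$, then $G(w) \geq c/2$.
   Context: $F(w) = \frac{1}{n}\sum_{i=1}^n \log(1+\exp(-\langle w, x_i\rangle))$ and $G(w) = \frac{1}{n}\sum_{i=1}^n \frac{1}{\exp(\langle w, x_i\rangle)+1}$. *)

(* Defs.v *)
From mathcomp Require Import all_boot all_order all_algebra.
From mathcomp Require Import all_classical all_reals all_analysis.
Set Implicit Arguments. Unset Strict Implicit. Unset Printing Implicit Defensive.
Import Order.TTheory GRing.Theory Num.Theory.
Local Open Scope ring_scope.

Definition dotp (R : realType) (d : nat) (u v : 'rV[R]_d) : R :=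
  \sum_(j < d) u 0 j * v 0 j.

Definition Floss (R : realType) (n d : nat) (x : 'I_n -> 'rV[R]_d) (w : 'rV[R]_d) : R :=
  n%:R^-1 * \sum_(i < n) ln (1 + expR (- dotp w (x i))).

Definition Gfun (R : realType) (n d : nat) (x : 'I_n -> 'rV[R]_d) (w : 'rV[R]_d) : R :=
  n%:R^-1 * \sum_(i < n) (expR (dotp w (x i)) + 1)^-1.

(* Main.v *)
Require Import Defs.
From mathcomp Require Import all_boot all_order all_algebra.
From mathcomp Require Import all_classical all_reals all_analysis.
From mathcomp Require Import ring lra.
Import Order.TTheory GRing.Theory Num.Theory.
Local Open Scope ring_scope.

Lemma g_eq (R : realType) (z : R) :
  (expR z + 1)^-1 = 1 - expR (- ln (1 + expR (- z))).
Proof.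
have h1 : 0 < 1 + expR (- z) by rewrite addr_gt0 ?expR_gt0.
rewrite expRN lnK ?posrE // expRN.
have hz := expR_gt0 z.
by field; rewrite gt_eqF //= gt_eqF //; lra.
Qed.

Lemma ell_ge0 (R : realType) (z : R) : 0 <= ln (1 + expR (- z)).
Proof. apply: ln_ge0; have := expR_gt0 (- z); lra. Qed.

Lemma subadd {R : realType} {n : nat} (a : 'I_n -> R) :
  (forall i, 0 <= a i) ->
  1 - expR (- \sum_(i < n) a i) <= \sum_(i < n) (1 - expR (- a i)).
Proof.
move=> ha.
suff : 0 <= \sum_(i < n) a i /\
  1 - expR (- \sum_(i < n) a i) <= \sum_(i < n) (1 - expR (- a i)) by case.
apply: (big_rec2 (fun y1 y2 => 0 <= y1 /\ 1 - expR (- y1) <= y2)) => [|i y1 y2 _ [hy1 hy2]].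
  by rewrite oppr0 expR0 subrr.
split; first by rewrite addr_ge0.
rewrite opprD expRD.
have e1 : expR (- a i) <= 1 by rewrite expR_le1 oppr_le0.
have e2 : expR (- y1) <= 1 by rewrite expR_le1 oppr_le0.
have p1 := expR_gt0 (- a i). have p2 := expR_gt0 (- y1).
nra.
Qed.

Lemma half_bound {R : realType} (t : R) : 0 <= t -> t <= 1 -> t / 2 <= 1 - expR (- t).
Proof.
move=> h0 h1.
have e : (1 + t / 2) ^+ 2 <= expR t.
  have h := expR_ge1Dx (t / 2).
  have -> : t = t / 2 + t / 2 by field.
  rewrite expRD expr2; apply: ler_pM => //; lra.
rewrite expRN.
have ht := expR_gt0 t.
rewrite -subr_ge0.
have -> : 1 - (expR t)^-1 - t / 2 = ((1 - t / 2) * expR t - 1) / expR t.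
  field; apply/eqP; lra.
apply: divr_ge0; last lra.
rewrite expr2 in e. nra.
Qed.

Theorem lemma15 (R : realType) (n d : nat) (hn : (0 < n)%N)
  (x : 'I_n -> 'rV[R]_d) (w : 'rV[R]_d) (c : R) :
  (c <= Floss x w -> (1 - expR (- (n%:R * c))) / n%:R <= Gfun x w) /\
  (c <= Floss x w -> c <= n%:R^-1 -> c / 2 <= Gfun x w).
Proof.
have hN : 0 < n%:R :> R by rewrite ltr0n.
have G0 : 0 <= Gfun x w.
  rewrite /Gfun; apply: mulr_ge0; first by rewrite invr_ge0 ltW.
  apply: sumr_ge0 => i _; rewrite invr_ge0; have := expR_gt0 (dotp w (x i)); lra.
have P1 : c <= Floss x w -> (1 - expR (- (n%:R * c))) / n%:R <= Gfun x w.
  move=> hc; rewrite /Gfun mulrC (ler_pM2l (x:=n%:R^-1)) ?invr_gt0 //.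
  rewrite (eq_bigr _ (fun i _ => g_eq _ (dotp w (x i)))).
  apply: le_trans (subadd _ (fun i => ell_ge0 _ (dotp w (x i)))).
  rewrite lerD2l lerN2 ler_expR lerN2.
  move: hc; rewrite /Floss => hc.
  have := ler_pM2l hN c (n%:R^-1 * \sum_(i < n) ln (1 + expR (- dotp w (x i)))).
  rewrite mulrA divff ?mul1r; last by rewrite gt_eqF.
  by move=> ->.
split => // hc hcn.
case: (lerP c 0) => hc0; first by apply: le_trans G0; lra.
apply: le_trans (P1 hc).
have t0 : 0 <= n%:R * c by apply: mulr_ge0; lra.
have t1 : n%:R * c <= 1.
  by have := hcn; rewrite -(ler_pM2l hN) divff ?(gt_eqF hN).
have := half_bound _ t0 t1.
move=> h.
have -> : c / 2 = (n%:R * c / 2) / n%:R by field; apply/eqP; lra.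
by rewrite (ler_pM2r (x:=n%:R^-1)) ?invr_gt0.
Qed.
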